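(* Let $\Sigma$ be a finite totally ordered alphabet. For all $x\in\Sigma^n$, $$|\mathcal{C}_x|=\sum_{y\in G_{x,\leq n}}\frac{1}{|\mathsf{Orbit}(y)|}=\sum_{y\in G_{x,\leq n}}\frac{1}{\mathsf{FP}(y)}.$$
   Context: For $y\in\Sigma^n$, $\mathsf{Orbit}(y)$ is the set consisting of $y$ and all its distinct cyclic rotations. $\mathsf{FP}(y)$ is the fundamental period of $y$: the least $p$ such that $y=y_1^{n/p}$ for some $y_1\in\Sigma^p$. For an orbit $E$ and $x\in\Sigma^n$, $E<x$ means $E$ contains a string lexicographically less than $x$; $\mathcal{C}_x$ is the set of orbits $E$ with $E<x$; and $G_{x,\leq p}=\bigcup_{E\in\mathcal{C}_x,\ |E|\text{ divides }p}E$. *)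

(* Defs.v *)
From mathcomp Require Import all_boot all_order all_algebra.
Set Implicit Arguments. Unset Strict Implicit. Unset Printing Implicit Defensive.
Import Order.TTheory GRing.Theory.

Definition lex_lt d (T : orderType d) (s t : seq T) : bool :=
  ((s : seqlexi T) < (t : seqlexi T))%O.

Definition Orbit (T : finType) n (y : n.-tuple T) : {set n.-tuple T} :=
  [set rot_tuple i y | i : 'I_n.+1].

Definition orbits (T : finType) n : {set {set n.-tuple T}} :=
  [set Orbit y | y : n.-tuple T].

Definition orbit_lt d (T : finOrderType d) n (E : {set n.-tuple T}) (x : n.-tuple T) :=
  [exists y in E, lex_lt y x].

Definition Cx d (T : finOrderType d) n (x : n.-tuple T) : {set {set n.-tuple T}} :=
  [set E in orbits T n | orbit_lt E x].

Definition Gx d (T : finOrderType d) n (x : n.-tuple T) (p : nat) : {set n.-tuple T} :=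
  \bigcup_(E in Cx x | #|E| %| p) E.

(* FP(y): least p (p >= 1) such that y = y1^(n/p) for some y1 of length p.
   Since y1 must be the prefix of length p, this is: p %| n and y equals
   (n/p) concatenated copies of take p y. *)
Definition FP (T : finType) n (y : n.-tuple T) : nat :=
  head n [seq p <- iota 1 n | (p %| n) && (flatten (nseq (n %/ p) (take p y)) == y)].

(* Main.v *)
Require Import Defs.
From mathcomp Require Import all_boot all_order all_algebra.
Import Order.TTheory GRing.Theory.
Set Implicit Arguments. Unset Strict Implicit. Unset Printing Implicit Defensive.

Lemma power_rot (T : Type) (t : seq T) m :
  0 < m -> rot (size t) (flatten (nseq m t)) = flatten (nseq m t).
Proof.
case: m => [|m] _ //=; rewrite rot_size_cat.
elim: m => [|m IH] /=; first by rewrite cats0.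
by rewrite -catA IH.
Qed.

Lemma rot_power (T : Type) k m (s : seq T) :
  size s = m * k -> rot k s = s -> s = flatten (nseq m (take k s)).
Proof.
elim: m s => [|m IH] s Hs Hr; first by apply: size0nil.
rewrite /=.
set t := take k s; set z := drop k s.
have Es : s = t ++ z by rewrite cat_take_drop.
have Ht : size t = k by rewrite size_take_min Hs mulSn; apply/minn_idPl; rewrite leq_addr.
have Hz : size z = m * k by rewrite size_drop Hs mulSn addKn.
have Hc : z ++ t = t ++ z by rewrite -Es -Hr /rot.
case: m IH Hz Hs => [|m] IH Hz Hs.
  by rewrite /= cats0 (size0nil Hz) cats0 in Es *.
have Hkz : k <= size z by rewrite Hz mulSn leq_addr.
have Htz : take k z = t.
  by have := congr1 (take k) Hc; rewrite takel_cat // take_size_cat.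
have Hrz : rot k z = z.
  have := congr1 (drop k) Hc; rewrite (drop_size_cat _ Ht) /rot => E; rewrite -[in RHS]E.
  rewrite drop_cat Htz; case: ltnP => // Hle.
  have Heq : size z = k by apply/eqP; rewrite eqn_leq Hle Hkz.
  by rewrite -Heq subnn drop0 drop_size.
by have := IH z Hz Hrz; rewrite Htz => Ez; rewrite {1}Es {1}Ez.
Qed.

Section S.
Variables (T : finType) (n : nat).
Definition r1 (y : n.-tuple T) : n.-tuple T := rot_tuple 1 y.
Lemma r1_inj : injective r1.
Proof. by move=> a b /(congr1 val) /= /rot_inj /val_inj. Qed.

Lemma iter_r1 i y : i <= n -> val (iter i r1 y) = rot i y.
Proof.
elim: i => [|i IH] Hi /=; first by rewrite rot0.
rewrite IH ?(ltnW Hi) // -rotD ?add1n // size_tuple //.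
Qed.

Lemma iter_r1_n y : iter n r1 y = y.
Proof. by apply: val_inj; rewrite iter_r1 // -{1}(size_tuple y) rot_size. Qed.

Lemma iter_r1_mod i y : iter i r1 y = iter (i %% n) r1 y.
Proof.
rewrite {1}(divn_eq i n) iterD; move: (iter _ r1 y) => z.
elim: (i %/ n) => [|q IH] //=; by rewrite mulSn iterD IH iter_r1_n.
Qed.

Lemma in_Orbit y z : (z \in Orbit y) = fconnect r1 y z.
Proof.
apply/imsetP/idP => [[i _ ->]|].
  have -> : rot_tuple i y = iter i r1 y.
    by apply: val_inj; rewrite iter_r1 // -ltnS.
  exact: fconnect_iter.
move=> /iter_findex <-; rewrite iter_r1_mod.
case: (posnP n) => Hn.
  exists ord0 => //; apply: val_inj; rewrite /= rot0.
  by rewrite (size0nil (etrans (size_tuple _) Hn)) (size0nil (etrans (size_tuple y) Hn)).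
have Hm : (findex r1 y z %% n) < n.+1 by rewrite ltnS ltnW // ltn_mod.
exists (Ordinal Hm) => //; apply: val_inj; rewrite iter_r1 //= -ltnS //.
Qed.

Lemma card_Orbit (y : n.-tuple T) : #|Orbit y| = order r1 y.
Proof. by apply: eq_card => z; rewrite in_Orbit. Qed.

Lemma Orbit_eq (y z : n.-tuple T) : z \in Orbit y -> Orbit z = Orbit y.
Proof.
rewrite in_Orbit => H; apply/setP => w; rewrite !in_Orbit.
have sym : connect_sym (frel r1) by move=> a b; apply: (fconnect_sym r1_inj).
by rewrite (same_connect sym H).
Qed.

Lemma iter_order_mul q (y : n.-tuple T) : iter (q * order r1 y) r1 y = y.
Proof.
elim: q => [|q IH] //=; by rewrite mulSn iterD IH (iter_order r1_inj).
Qed.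

Lemma order_min k (y : n.-tuple T) : 0 < k < order r1 y -> iter k r1 y != y.
Proof.
case/andP=> k0 kl; apply/eqP => H.
have := findex_iter kl; rewrite H findex0 => E.
by rewrite -E in k0.
Qed.

Lemma order_dvd (y : n.-tuple T) : order r1 y %| n.
Proof.
have Hk := order_gt0 r1 y.
rewrite /dvdn; apply/eqP.
have H : iter (n %/ order r1 y * order r1 y + n %% order r1 y) r1 y = y.
  by rewrite -divn_eq iter_r1_n.
rewrite addnC iterD iter_order_mul in H.
case: (posnP (n %% order r1 y)) => Hr //.
by have := @order_min (n %% order r1 y) y; rewrite Hr ltn_mod Hk H eqxx => /(_ isT).
Qed.

Lemma FP_order (y : n.-tuple T) : 0 < n -> FP y = order r1 y.
Proof.
move=> n0.
set P := fun p => (p %| n) && (flatten (nseq (n %/ p) (take p y)) == y).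
have Ha : forall p, 0 < p -> P p -> iter p r1 y = y.
  move=> p p0 /andP[pn /eqP E].
  have pln : p <= n by apply: dvdn_leq.
  apply: val_inj; rewrite iter_r1 //.
  have Ht : size (take p y) = p by rewrite size_takel // size_tuple.
  rewrite -E -{1}Ht power_rot // divn_gt0 //.
set k := order r1 y.
have k0 : 0 < k := order_gt0 r1 y.
have kn : k %| n := order_dvd y.
have kln : k <= n by apply: dvdn_leq.
have Pk : P k.
  rewrite /P kn /=; apply/eqP; apply/esym/rot_power.
    by rewrite size_tuple divnK.
  by rewrite -iter_r1 // (iter_order r1_inj).
have Pn : forall p, 0 < p < k -> ~~ P p.
  move=> p /andP[p0 pk]; apply/negP => /(Ha p p0) E.
  by have := @order_min p y; rewrite p0 pk E eqxx => /(_ isT).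
rewrite /FP -/P.
have -> : iota 1 n = iota 1 k.-1 ++ iota k (n - k.-1).
  by rewrite -{2}(prednK k0) -add1n -iotaD subnKC // (leq_trans (leq_pred k)).
rewrite filter_cat (eq_in_filter (a2 := pred0)); last first.
  move=> p; rewrite mem_iota add1n prednK // => /andP[p0 pk] /=.
  by apply/negbTE/Pn; rewrite p0 pk.
rewrite filter_pred0 /=.
have -> : n - k.-1 = (n - k).+1 by rewrite -subSn // -{2}(prednK k0) subSS.
by rewrite /= Pk.
Qed.
End S.

Local Open Scope ring_scope.

Theorem lemma2 (d : Order.disp_t) (T : finOrderType d) (n : nat) (x : n.-tuple T) :
  (#|Cx x|%:R : rat) = \sum_(y in Gx x n) (#|Orbit y|%:R)^-1 /\
  \sum_(y in Gx x n) ((#|Orbit y|%:R)^-1 : rat) = \sum_(y in Gx x n) ((FP y)%:R)^-1.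
Proof.
have CxO : forall E, E \in Cx x -> exists a, E = Orbit a.
  by move=> E; rewrite inE => /andP[/imsetP[a _ ->] _]; exists a.
have self : forall a : n.-tuple T, a \in Orbit a.
  by move=> a; rewrite in_Orbit connect0.
split.
  have -> : Gx x n = cover (Cx x).
    rewrite /Gx /cover; apply: eq_bigl => E; case HE: (E \in Cx x) => //=.
    by have [a ->] := CxO E HE; rewrite card_Orbit order_dvd.
  rewrite big_trivIset; last first.
    apply/trivIsetP => A B HA HB neq; rewrite -setI_eq0; apply/negPn/negP.
    case/set0Pn => z /setIP[za zb].
    have [a Ea] := CxO A HA; have [b Eb] := CxO B HB.
    subst A B; move: neq; by rewrite -(Orbit_eq za) -(Orbit_eq zb) eqxx.
  rewrite -sum1_card natr_sum; apply: eq_bigr => E HE.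
  have [a Ea] := CxO E HE; subst E.
  rewrite (eq_bigr (fun _ => (#|Orbit a|%:R)^-1)); last by move=> y /Orbit_eq ->.
  rewrite sumr_const -[RHS]mulr_natr mulVf // Num.Theory.pnatr_eq0 -lt0n card_gt0; apply/set0Pn.
  by exists a.
have [n0|n0] := posnP n.
  apply: eq_bigr => y Hy; exfalso.
  move: Hy => /bigcupP[E /andP[HE _] _].
  move: HE; rewrite inE => /andP[_ /existsP[z /andP[_ Hz]]].
  move: Hz; rewrite /lex_lt.
  have -> : z = x.
    by subst n; rewrite (tuple0 z) (tuple0 x).
  by rewrite ltxx.
by apply: eq_bigr => y _; rewrite card_Orbit FP_order.
Qed.
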